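(* Let $A\in\mathbb{R}^{m\times n}$, $a\in\mathbb{R}^{1\times n}$, $c_A\in\mathbb{R}^m$, $c_a\in\mathbb{R}$, and let \[ P=\{x\in\mathbb{R}^n : Ax=c_A,\ ax=c_a,\ x\ge 0\},\qquad P_{\bar A}=\{(x,s)\in\mathbb{R}^n\times\mathbb{R} : Ax=c_A,\ ax+s=c_a,\ x\ge 0,\ s\ge 0\}. \] Then $d(P_{\bar A})\le d(A)+d(P)+2$.
   Context: The combinatorial diameter $d(P)$ of a polyhedron $P$ is the maximum, over all pairs of vertices, of the minimum number of edges in an edge walk in $P$ between them. For a matrix $M\in\mathbb{R}^{m\times n}$, $d(M):=\max\{d(\{x: Mx=r,\ x\ge 0\}) : r\in\mathbb{R}^m\}$. *)

(* Defs.v *)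
From mathcomp Require Import all_boot all_order all_algebra.
From mathcomp Require Import reals.
Set Implicit Arguments. Unset Strict Implicit. Unset Printing Implicit Defensive.
Import Order.TTheory GRing.Theory Num.Theory.
Local Open Scope ring_scope.

Section Polyhedra.
Variable R : realType.

Definition pset (n : nat) := 'cV[R]_n -> Prop.

Definition lin (n : nat) (c : 'rV[R]_n) (x : 'cV[R]_n) : R := (c *m x) 0 0.

Definition is_vertex (n : nat) (S : pset n) (v : 'cV[R]_n) : Prop :=
  S v /\ exists c : 'rV[R]_n, forall x, S x ->
    lin c x <= lin c v /\ (lin c x = lin c v -> x = v).

Definition is_edge (n : nat) (S : pset n) (u v : 'cV[R]_n) : Prop :=
  u <> v /\ is_vertex S u /\ is_vertex S v /\
  exists c : 'rV[R]_n, lin c u = lin c v /\ forall x, S x ->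
    lin c x <= lin c u /\
    (lin c x = lin c u -> exists t : R, 0 <= t <= 1 /\ x = (1 - t) *: u + t *: v).

Fixpoint walk (n : nat) (S : pset n) (u : 'cV[R]_n) (p : seq 'cV[R]_n)
  (v : 'cV[R]_n) : Prop :=
  match p with
  | [::] => u = v
  | w :: p' => is_edge S u w /\ walk S w p' v
  end.

Definition diam_le (n : nat) (S : pset n) (k : nat) : Prop :=
  forall u v, is_vertex S u -> is_vertex S v ->
    exists p : seq 'cV[R]_n, (size p <= k)%N /\ walk S u p v.

Definition std_poly (m n : nat) (M : 'M[R]_(m, n)) (r : 'cV[R]_m) : pset n :=
  fun x => M *m x = r /\ forall i, 0 <= x i 0.

(* d(M) <= k : d({x : Mx = r, x >= 0}) <= k for every right-hand side r *)
Definition mat_diam_le (m n : nat) (M : 'M[R]_(m, n)) (k : nat) : Prop :=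
  forall r : 'cV[R]_m, diam_le (std_poly M r) k.

Definition P_poly (m n : nat) (A : 'M[R]_(m, n)) (a : 'rV[R]_n)
  (cA : 'cV[R]_m) (ca : R) : pset n :=
  fun x => A *m x = cA /\ lin a x = ca /\ forall i, 0 <= x i 0.

Definition PAbar_poly (m n : nat) (A : 'M[R]_(m, n)) (a : 'rV[R]_n)
  (cA : 'cV[R]_m) (ca : R) : pset (n + 1) :=
  fun y => let x := usubmx y in let s := dsubmx y 0 0 in
    A *m x = cA /\ lin a x + s = ca /\ (forall i, 0 <= x i 0) /\ 0 <= s.

End Polyhedra.

(* Main.v *)
Require Import Defs.
From mathcomp Require Import all_boot all_order all_algebra.
From mathcomp Require Import reals.
From mathcomp Require Import ring lra zify.
From Stdlib Require Import Classical.
Set Implicit Arguments. Unset Strict Implicit. Unset Printing Implicit Defensive.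
Import Order.TTheory GRing.Theory Num.Theory.
Local Open Scope ring_scope.

Section Generic.
Variable R : realType.
Variable N : nat.
Implicit Types (x y z u v : 'cV[R]_N) (c : 'rV[R]_N).

Definition nonneg x := forall i, 0 <= x i 0.
Definition cc (t : R) x y := (1 - t) *: x + t *: y.
Definition supp_le x y := forall i, y i 0 = 0 -> x i 0 = 0.

Lemma linD c x y : lin c (x + y) = lin c x + lin c y.
Proof. by rewrite /lin mulmxDr mxE. Qed.
Lemma linZ c t x : lin c (t *: x) = t * lin c x.
Proof. by rewrite /lin -scalemxAr mxE. Qed.
Lemma linN c x : lin c (- x) = - lin c x.
Proof. by rewrite /lin mulmxN mxE. Qed.
Lemma lin_cc c t x y : lin c (cc t x y) = lin c x + t * (lin c y - lin c x).
Proof. rewrite /cc linD !linZ; ring. Qed.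
Lemma cc_entry t x y i : (cc t x y) i 0 = x i 0 + t * (y i 0 - x i 0).
Proof. rewrite /cc !mxE; ring. Qed.

Lemma fin_eps (Pr : 'I_N -> R -> Prop) :
  (forall i, exists2 e, 0 < e & forall t, `|t| <= e -> Pr i t) ->
  exists2 e, 0 < e & forall i t, `|t| <= e -> Pr i t.
Proof.
move=> H.
suff [e e0 He] : exists2 e, 0 < e & forall i, i \in enum 'I_N -> forall t, `|t| <= e -> Pr i t.
  by exists e => // i t; apply: He; rewrite mem_enum.
elim: (enum 'I_N) => [|j s [e e0 He]]; first by exists 1.
have [ej ej0 Hj] := H j.
exists (Num.min e ej); first by rewrite lt_min e0 ej0.
move=> i; rewrite inE => /orP [/eqP -> | his] t; rewrite le_min => /andP [h1 h2].
  exact: Hj.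
exact: He.
Qed.

Lemma eps_exists x z : nonneg x -> supp_le z x ->
  exists2 e, 0 < e & forall t, `|t| <= e -> nonneg (cc t x z).
Proof.
move=> nx sz.
have [e e0 He] : exists2 e, 0 < e & forall i t, `|t| <= e -> 0 <= x i 0 + t * (z i 0 - x i 0).
  apply: fin_eps => i.
  have [xi0|xi0] := eqVneq (x i 0) 0.
    by exists 1 => // t _; rewrite xi0 (sz i xi0) subrr mulr0 addr0.
  have xp : 0 < x i 0 by rewrite lt_def xi0 nx.
  set d := z i 0 - x i 0.
  exists (x i 0 / (`|d| + 1)); first by rewrite divr_gt0 // ltr_wpDl.
  move=> t ht.
  have h1 : `|t * d| <= x i 0.
    rewrite normrM.
    have : `|t| * `|d| <= x i 0 / (`|d| + 1) * `|d| by rewrite ler_wpM2r.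
    move/le_trans; apply.
    rewrite mulrAC ler_pdivrMr ?ltr_wpDl // ler_wpM2l ?ltW //.
    lra.
  have := ler_normr (t * d) ; have := h1.
  move: (t * d) => w hw; rewrite ler_norml in hw; case/andP: hw => hw _ _.
  by rewrite -lerBlDl sub0r.
exists e => // t ht i; rewrite cc_entry; exact: He.
Qed.

Variable S : pset R N.
Variable L : pset R N.
Hypothesis HS : forall z, S z <-> L z /\ nonneg z.
Hypothesis HL : forall x y t, L x -> L y -> L (cc t x y).

Lemma face_eq c y z : S y -> (forall x, S x -> lin c x <= lin c y) ->
  L z -> supp_le z y ->
  exists2 e, 0 < e & S (cc e y z) /\ lin c z = lin c y.
Proof.
move=> Sy Hc Lz sz.
have [Ly ny] := (HS y).1 Sy.
have [e e0 He] := eps_exists ny sz.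
exists e => //.
have S1 : S (cc e y z) by apply/HS; split; [apply: HL | apply: He; rewrite ger0_norm // ltW].
have S2 : S (cc (- e) y z) by apply/HS; split; [apply: HL | apply: He; rewrite normrN ger0_norm // ltW].
split => //.
have := Hc _ S1; have := Hc _ S2; rewrite !lin_cc.
rewrite !gerDl mulNr oppr_le0 => h2 h1.
rewrite pmulr_rge0 // in h2; rewrite pmulr_rle0 // in h1.
apply/eqP; rewrite -subr_eq0; apply/eqP/le_anti.
by rewrite h2 h1.
Qed.

Lemma cc_sub t x y : cc t x y - x = t *: (y - x).
Proof. by apply/matrixP => i j; rewrite !mxE; ring. Qed.

Lemma lin_sum c x : lin c x = \sum_i c 0 i * x i 0.
Proof. by rewrite /lin mxE. Qed.

Lemma expose (T : pred 'I_N) x : nonneg x ->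
  lin (\row_i (if T i then -1 else 0)) x <= 0 /\
  (lin (\row_i (if T i then -1 else 0)) x = 0 -> forall i, T i -> x i 0 = 0).
Proof.
move=> nx.
have E : lin (\row_i (if T i then -1 else 0)) x = - \sum_i (if T i then x i 0 else 0).
  rewrite lin_sum -sumrN; apply: eq_bigr => i _; rewrite mxE.
  by case: (T i); rewrite ?mulN1r ?mul0r ?oppr0.
have F0 : forall i, 0 <= (if T i then x i 0 else 0) by move=> i; case: (T i).
rewrite E oppr_le0; split; first by apply: sumr_ge0.
move/eqP; rewrite oppr_eq0 => /eqP H i Ti.
have := psumr_eq0P (P := predT) (fun i _ => F0 i) H (i := i) isT.
by rewrite Ti.
Qed.

Lemma vtx_strong y z : is_vertex S y -> L z -> supp_le z y -> z = y.
Proof.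
move=> [Sy [c Hc]] Lz sz.
have [e e0 [S1 E]] := face_eq Sy (fun x Sx => (Hc x Sx).1) Lz sz.
have := (Hc _ S1).2; rewrite lin_cc E subrr mulr0 addr0 => /(_ erefl) H.
have : e *: (z - y) = 0 by rewrite -cc_sub H subrr.
move/eqP; rewrite scaler_eq0 (gt_eqF e0) /= subr_eq0 => /eqP //.
Qed.

Lemma vtx_weak y : S y -> (forall z, S z -> supp_le z y -> z = y) -> is_vertex S y.
Proof.
move=> Sy H; split => //.
exists (\row_i (if y i 0 == 0 then -1 else 0)) => x Sx.
have [_ nx] := (HS x).1 Sx; have [_ ny] := (HS y).1 Sy.
have [h1 h2] := expose (fun i => y i 0 == 0) nx.
have [_ h3] := expose (fun i => y i 0 == 0) ny.
have -> : lin (\row_i (if y i 0 == 0 then -1 else 0)) y = 0.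
  rewrite lin_sum big1 // => i _; rewrite mxE; case: eqP => [->|_]; ring.
split => // /h2 hz; apply: H => // i /eqP; exact: hz.
Qed.

Lemma edge_strong u v z : is_edge S u v -> S z ->
  (forall i, u i 0 = 0 -> v i 0 = 0 -> z i 0 = 0) ->
  exists t : R, 0 <= t <= 1 /\ z = (1 - t) *: u + t *: v.
Proof.
move=> [neq [[Su _] [[Sv _] [c [ceq Hc]]]]] Sz hz.
have [Lu nu] := (HS u).1 Su; have [Lv nv] := (HS v).1 Sv.
have [Lz nz] := (HS z).1 Sz.
set m := cc (1/2) u v.
have Sm : S m.
  apply/HS; split; first exact: HL.
  move=> i; rewrite cc_entry; have := nu i; have := nv i; lra.
have lm : lin c m = lin c u by rewrite lin_cc ceq subrr mulr0 addr0.
have Hm : forall x, S x -> lin c x <= lin c m by move=> x Sx; rewrite lm; exact: (Hc x Sx).1.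
have sz : supp_le z m.
  move=> i; rewrite cc_entry => hm; apply: hz; have := nu i; have := nv i; lra.
have [e _ [_ E]] := face_eq Sm Hm Lz sz.
by apply: (Hc z Sz).2; rewrite E.
Qed.

Lemma edge_weak u v : u <> v -> is_vertex S u -> is_vertex S v ->
  (forall z, S z -> (forall i, u i 0 = 0 -> v i 0 = 0 -> z i 0 = 0) ->
     exists t : R, 0 <= t <= 1 /\ z = (1 - t) *: u + t *: v) ->
  is_edge S u v.
Proof.
move=> neq Vu Vv H; split => //; split => //; split => //.
have [Su _] := Vu; have [Sv _] := Vv.
have [_ nu] := (HS u).1 Su; have [_ nv] := (HS v).1 Sv.
set T := fun i => (u i 0 == 0) && (v i 0 == 0).
pose c : 'rV[R]_N := \row_i (if T i then -1 else 0).
have l0 : forall w, nonneg w -> (forall i, T i -> w i 0 = 0) -> lin c w = 0.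
  move=> w nw hw; rewrite lin_sum big1 // => i _; rewrite mxE.
  by case Ti: (T i); rewrite ?(hw i Ti); ring.
have lu : lin c u = 0 by apply: l0 => // i /andP [/eqP ->].
have lv : lin c v = 0 by apply: l0 => // i /andP [_ /eqP ->].
exists c; rewrite lu lv; split => // x Sx.
have [_ nx] := (HS x).1 Sx.
have [h1 h2] := expose T nx.
split => // /h2 hx; apply: H => // i ui vi; apply: hx; by rewrite /T ui vi !eqxx.
Qed.

End Generic.

Lemma cc_cc (R : realType) N s t (x y : 'cV[R]_N) : cc s x (cc t x y) = cc (s * t) x y.
Proof. by apply/matrixP => i j; rewrite !mxE; ring. Qed.

Lemma mul_cc (R : realType) M N t (B : 'M[R]_(M, N)) x y :
  B *m cc t x y = cc t (B *m x) (B *m y).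
Proof. by rewrite /cc mulmxDr -!scalemxAr. Qed.

Lemma edge_sym (R : realType) N (S : pset R N) u v : is_edge S u v -> is_edge S v u.
Proof.
move=> [neq [Vu [Vv [c [ceq Hc]]]]]; split; first by move=> e; apply: neq.
split => //; split => //; exists c; split => // x Sx.
rewrite -ceq; have [h1 h2] := Hc x Sx; split => // /h2 [t [t01 ->]].
exists (1 - t); split; first by move: t01 => /andP [? ?]; apply/andP; split; lra.
by apply/matrixP => i j; rewrite !mxE; ring.
Qed.

Lemma walk_cat (R : realType) N (S : pset R N) u p w q v :
  walk S u p w -> walk S w q v -> walk S u (p ++ q) v.
Proof.
elim: p u => [|x p IH] u /=; first by move=> ->.
by move=> [e W] W2; split => //; apply: IH.
Qed.

Lemma walk_rev (R : realType) N (S : pset R N) u p v :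
  walk S u p v -> exists q, size q = size p /\ walk S v q u.
Proof.
elim: p u => [|x p IH] u /=; first by move=> ->; exists [::].
move=> [e W]; have [q [sq Wq]] := IH _ W.
exists (rcons q u); rewrite size_rcons sq; split => //.
rewrite -cats1; apply: walk_cat Wq _ => /=; split => //; exact: edge_sym.
Qed.

Section Main.
Variable R : realType.
Variables m n : nat.
Variable A : 'M[R]_(m, n).
Variable a : 'rV[R]_n.
Variable cA : 'cV[R]_m.
Variable ca : R.

Notation Q := (std_poly A cA).
Notation P := (P_poly A a cA ca).
Notation PA := (PAbar_poly A a cA ca).

Definition LQ (z : 'cV[R]_n) := A *m z = cA.
Definition LP (z : 'cV[R]_n) := A *m z = cA /\ lin a z = ca.
Definition LPA (z : 'cV[R]_(n + 1)) :=
  A *m usubmx z = cA /\ lin a (usubmx z) + dsubmx z 0 0 = ca.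

Definition psi (x : 'cV[R]_n) : 'cV[R]_(n + 1) := col_mx x (const_mx (ca - lin a x)).

Lemma ord_split (F : 'I_(n + 1) -> Prop) :
  (forall j, F (lshift 1 j)) -> F (rshift n ord0) -> forall i, F i.
Proof.
move=> H1 H2 i; case: (splitP i) => [j hj|k hk].
  by have -> : i = lshift 1 j by apply: val_inj.
have -> : i = rshift n k by apply: val_inj.
by rewrite (ord1 k).
Qed.

Lemma psi_l x j : psi x (lshift 1 j) 0 = x j 0.
Proof. by rewrite /psi col_mxEu. Qed.
Lemma psi_r x : psi x (rshift n ord0) 0 = ca - lin a x.
Proof. by rewrite /psi col_mxEd mxE. Qed.
Lemma psi_u x : usubmx (psi x) = x.
Proof. by rewrite /psi col_mxKu. Qed.
Lemma psi_d x : dsubmx (psi x) 0 0 = ca - lin a x.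
Proof. by rewrite /psi col_mxKd mxE. Qed.
Lemma psi_inj x y : psi x = psi y -> x = y.
Proof. by move=> e; rewrite -(psi_u x) e psi_u. Qed.

Lemma psi_cc t x y : psi (cc t x y) = cc t (psi x) (psi y).
Proof.
rewrite /cc /psi !scale_col_mx add_col_mx; congr col_mx.
apply/matrixP => i j; rewrite !mxE lin_cc; ring.
Qed.

Lemma nonneg_split (y : 'cV[R]_(n + 1)) :
  nonneg y <-> nonneg (usubmx y) /\ 0 <= dsubmx y 0 0.
Proof.
split.
  by move=> ny; split; [move=> i; rewrite mxE | rewrite mxE].
move=> [nu nd]; apply: ord_split.
  by move=> j; have := nu j; rewrite mxE.
by move: nd; rewrite mxE.
Qed.

Lemma HS_Q z : Q z <-> LQ z /\ nonneg z. Proof. by []. Qed.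
Lemma HS_P z : P z <-> LP z /\ nonneg z.
Proof. by rewrite /P_poly /LP; split => [[? [? ?]]|[[? ?] ?]]. Qed.
Lemma HS_PA z : PA z <-> LPA z /\ nonneg z.
Proof.
rewrite /PAbar_poly /LPA nonneg_split; split.
  by move=> [? [? [? ?]]].
by move=> [[? ?] [? ?]].
Qed.
Lemma HL_Q x y t : LQ x -> LQ y -> LQ (cc t x y).
Proof. by rewrite /LQ mul_cc => -> ->; rewrite /cc -scalerDl subrK scale1r. Qed.
Lemma HL_P x y t : LP x -> LP y -> LP (cc t x y).
Proof.
move=> [h1 h2] [h3 h4]; split; first exact: HL_Q.
by rewrite lin_cc h2 h4 subrr mulr0 addr0.
Qed.
Lemma usub_cc t (x y : 'cV[R]_(n + 1)) : usubmx (cc t x y) = cc t (usubmx x) (usubmx y).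
Proof. by apply/matrixP => i j; rewrite !mxE. Qed.
Lemma dsub_cc t (x y : 'cV[R]_(n + 1)) : dsubmx (cc t x y) 0 0 = (cc t (dsubmx x) (dsubmx y)) 0 0.
Proof. by rewrite !mxE. Qed.
Lemma HL_PA x y t : LPA x -> LPA y -> LPA (cc t x y).
Proof.
move=> [h1 h2] [h3 h4]; split; first by rewrite usub_cc; exact: HL_Q.
rewrite usub_cc dsub_cc lin_cc cc_entry.
have -> : lin a (usubmx y) = ca - dsubmx y 0 0 by rewrite -h4; ring.
have -> : lin a (usubmx x) = ca - dsubmx x 0 0 by rewrite -h2; ring.
ring.
Qed.

Lemma PA_psi x : PA (psi x) <-> Q x /\ lin a x <= ca.
Proof.
rewrite /PAbar_poly /std_poly psi_u psi_d subr_ge0; split.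
  by move=> [? [? [? ?]]].
by move=> [[? ?] ?]; split => //; split; [ring|].
Qed.
Lemma LPA_psi x : LPA (psi x) <-> LQ x.
Proof. by rewrite /LPA psi_u psi_d; split => [[]|] // ?; split => //; ring. Qed.

Lemma PA_eq y : PA y -> y = psi (usubmx y).
Proof.
move=> [_ [h _]]; rewrite -{1}(vsubmxK y) /psi; congr col_mx.
apply/matrixP => i j; rewrite (ord1 i) (ord1 j) [RHS]mxE -h; ring.
Qed.

Lemma supp_psi z x : supp_le z x -> (ca - lin a x = 0 -> ca - lin a z = 0) ->
  supp_le (psi z) (psi x).
Proof.
move=> h1 h2; apply: ord_split.
  by move=> j; rewrite !psi_l; apply: h1.
by rewrite !psi_r.
Qed.

Lemma lin_row0 c (y : 'cV[R]_(n + 1)) : lin (row_mx c (0 : 'rV[R]_1)) y = lin c (usubmx y).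
Proof. by rewrite -{1}(vsubmxK y) /lin mul_row_col mul0mx addr0. Qed.

Lemma PA_Q y : PA y -> Q (usubmx y).
Proof. by case=> h1 [_ [h3 _]]; split. Qed.

Lemma V_PA_Q q : is_vertex Q q -> lin a q <= ca -> is_vertex PA (psi q).
Proof.
move=> [Sq [c Hc]] hq; split; first by apply/PA_psi.
exists (row_mx c 0) => y Sy; rewrite !lin_row0 psi_u.
have [h1 h2] := Hc _ (PA_Q Sy); split => // /h2 e.
by rewrite (PA_eq Sy) e.
Qed.

Lemma E_PA_Q q q' : is_edge Q q q' -> lin a q <= ca -> lin a q' <= ca ->
  is_edge PA (psi q) (psi q').
Proof.
move=> [neq [Vq [Vq' [c [ceq Hc]]]]] h h'.
split; first by move/psi_inj.
split; first exact: V_PA_Q.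
split; first exact: V_PA_Q.
exists (row_mx c 0); rewrite !lin_row0 !psi_u; split => // y Sy.
rewrite lin_row0; have [h1 h2] := Hc _ (PA_Q Sy); split => // /h2 [t [t01 e]].
exists t; split => //; rewrite (PA_eq Sy) e; exact: psi_cc.
Qed.

Lemma V_PA_P x : is_vertex P x -> is_vertex PA (psi x).
Proof.
move=> Vx; have [[Ax [ax nx]] _] := Vx.
apply: (vtx_weak HS_PA); first by apply/PA_psi; split => //; rewrite ax.
move=> z Sz sz; rewrite (PA_eq Sz) in sz *; congr psi.
apply: (vtx_strong HS_P HL_P Vx).
  split; first by case: Sz.
  have := sz (rshift n ord0); rewrite !psi_r ax subrr => /(_ erefl) h.
  by apply/eqP; rewrite -subr_eq0 -oppr_eq0 opprB h.
by move=> j hj; have := sz (lshift 1 j); rewrite !psi_l; apply.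
Qed.

Lemma E_PA_P x x' : is_edge P x x' -> is_edge PA (psi x) (psi x').
Proof.
move=> E; have [neq [Vx [Vx' _]]] := E.
have [[_ [ax _]] _] := Vx; have [[_ [ax' _]] _] := Vx'.
apply: (edge_weak HS_PA); first by move/psi_inj.
  exact: V_PA_P. exact: V_PA_P.
move=> z Sz hz; rewrite (PA_eq Sz) in hz *.
have Pz : P (usubmx z).
  have [Qz _] := PA_Q Sz.
  split; first by case: Sz.
  split; last by case: (PA_Q Sz).
  have := hz (rshift n ord0); rewrite !psi_r ax ax' subrr => /(_ erefl erefl) h.
  by apply/eqP; rewrite -subr_eq0 -oppr_eq0 opprB h.
have hz' : forall j, x j 0 = 0 -> x' j 0 = 0 -> usubmx z j 0 = 0.
  by move=> j; have := hz (lshift 1 j); rewrite !psi_l.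
have [t [t01 e]] := edge_strong HS_P HL_P E Pz hz'.
exists t; split => //; rewrite e; exact: psi_cc.
Qed.

Lemma V_P_PA x : is_vertex PA (psi x) -> lin a x = ca -> is_vertex P x.
Proof.
move=> V ax; have [[Ax nx] _] := (PA_psi x).1 V.1.
apply: (vtx_weak HS_P); first by split => //; split.
move=> z [Az [az nz]] sz; apply: psi_inj.
apply: (vtx_strong HS_PA HL_PA V); first by apply/LPA_psi.
by apply: supp_psi => // _; rewrite az subrr.
Qed.

Lemma V_Q_PA x : is_vertex PA (psi x) -> lin a x < ca -> is_vertex Q x.
Proof.
move=> V ax; have [Qx _] := (PA_psi x).1 V.1.
apply: (vtx_weak HS_Q) => // z [Az nz] sz; apply: psi_inj.
apply: (vtx_strong HS_PA HL_PA V); first by apply/LPA_psi.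
by apply: supp_psi => // /eqP; rewrite subr_eq0 => /eqP h; move: ax; rewrite h ltxx.
Qed.

Lemma V_P_Q q : is_vertex Q q -> lin a q = ca -> is_vertex P q.
Proof. by move=> V e; apply: V_P_PA => //; apply: V_PA_Q => //; rewrite e. Qed.

Lemma walk_P_PA x p x' : walk P x p x' -> walk PA (psi x) (map psi p) (psi x').
Proof.
elim: p x => [|y p IH] x /=; first by move=> ->.
by move=> [e W]; split; [exact: E_PA_P | exact: IH].
Qed.

Lemma nonneg_cc N t (x y : 'cV[R]_N) : 0 <= t <= 1 -> nonneg x -> nonneg y -> nonneg (cc t x y).
Proof.
move=> /andP [t0 t1] nx ny i; rewrite /cc !mxE.
by rewrite addr_ge0 // mulr_ge0 // subr_ge0.
Qed.

Lemma PA_le y : PA y -> lin a (usubmx y) <= ca.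
Proof. by case=> _ [h [_ s0]]; rewrite -h lerDl. Qed.

Lemma cross q q' : is_edge Q q q' -> lin a q < ca -> ca < lin a q' ->
  exists w, is_vertex P w /\ is_edge PA (psi q) (psi w).
Proof.
move=> E hq hq'; have E' := E; move: E => [neq [Vq [Vq' [c [ceq Hc]]]]].
have [[Aq nq] _] := Vq; have [[Aq' nq'] _] := Vq'.
pose D := lin a q' - lin a q.
have D0 : 0 < D by rewrite /D subr_gt0; exact: lt_trans hq hq'.
pose t := (ca - lin a q) / D.
have tD : t * D = ca - lin a q by rewrite /t divfK // gt_eqF.
have t0 : 0 < t by rewrite /t divr_gt0 // subr_gt0.
have t1 : t <= 1.
  rewrite /t ler_pdivrMr // mul1r /D lerD2r; exact: ltW.
pose w := cc t q q'.
have aw : lin a w = ca by rewrite /w lin_cc -/D tD; ring.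
have Qw : Q w by split; [apply: HL_Q | apply: nonneg_cc => //; rewrite ltW].
have Vw : is_vertex P w.
  apply: (vtx_weak HS_P); first by case: Qw => h1 h2; split => //; split.
  move=> z [Az [az nz]] sz.
  have hz : forall i, q i 0 = 0 -> q' i 0 = 0 -> z i 0 = 0.
    by move=> i h1 h2; apply: sz; rewrite /w /cc !mxE h1 h2; ring.
  have [tau [tau01 ez]] := edge_strong HS_Q HL_Q E' (conj Az nz) hz.
  have : tau * D = t * D.
    rewrite tD; move: az; rewrite ez.
    have -> : (1 - tau) *: q + tau *: q' = cc tau q q' by [].
    by rewrite lin_cc -/D => <-; ring.
  move/(mulIf (negbT (gt_eqF D0))) => et.
  by rewrite ez et.
exists w; split => //.
split.
  move/psi_inj => e; move: hq; rewrite e aw ltxx //.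
split; first by apply: V_PA_Q => //; exact: ltW.
split; first exact: V_PA_P.
have lw : lin c w = lin c q by rewrite /w lin_cc ceq subrr mulr0 addr0.
exists (row_mx c 0); rewrite !lin_row0 !psi_u lw; split => // y Sy.
rewrite lin_row0; have [h1 h2] := Hc _ (PA_Q Sy); split => // /h2 [tau [tau01 e]].
have ay := PA_le Sy.
case/andP: tau01 => tau0 tau1.
have taut : tau <= t.
  rewrite -(ler_pM2r D0) tD.
  move: ay; rewrite e.
  have -> : (1 - tau) *: q + tau *: q' = cc tau q q' by [].
  rewrite lin_cc -/D; lra.
exists (tau / t); split.
  by rewrite divr_ge0 ?(ltW t0) //= ler_pdivrMr // mul1r.
rewrite (PA_eq Sy) e.
have -> : (1 - tau) *: q + tau *: q' = cc (tau / t) q w by rewrite /w cc_cc divfK // gt_eqF.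
exact: psi_cc.
Qed.

Ltac contra0 := solve [ done | let H := fresh in intro H; exfalso; revert H; rewrite ?leNgt ?ltNge; match goal with Hh : is_true _ |- _ => rewrite Hh; done end ].

Lemma walk_edge_vtx (x : 'cV[R]_n) y p z : walk Q x (y :: p) z -> is_vertex Q x.
Proof. by case=> [[_ [V _]] _]. Qed.

Lemma Head p : forall q0 qk, walk Q q0 p qk -> lin a q0 <= ca -> ca < lin a qk ->
  exists w p1, is_vertex P w /\ (size p1 <= size p)%N /\ walk PA (psi q0) p1 (psi w).
Proof.
elim: p => [|q1 rest IH] q0 qk /=.
  by move=> -> h1 h2; move: (lt_le_trans h2 h1); rewrite ltxx.
move=> [E W] h0 hk.
have Vq0 : is_vertex Q q0 by case: E => _ [].
case: (lerP (lin a q1) ca) => h1.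
  have [w [p1 [Vw [s1 W1]]]] := IH _ _ W h1 hk.
  exists w, (psi q1 :: p1); split => //; split => //=.
  split => //; exact: E_PA_Q.
case: (ltrP (lin a q0) ca) => h0'.
  have [w [Vw Ew]] := cross E h0' h1.
  by exists w, [:: psi w]; split => //; split => //=.
have e0 : lin a q0 = ca by apply: le_anti; rewrite h0 h0'.
by exists q0, [::]; split => //; apply: V_P_Q.
Qed.

Lemma Claim p : forall q0 qk, walk Q q0 p qk -> lin a qk <= ca ->
  (lin a q0 <= ca /\ exists p', (size p' <= size p)%N /\ walk PA (psi q0) p' (psi qk))
  \/ (exists w' p1 p2, is_vertex P w' /\ walk PA (psi w') p2 (psi qk) /\
        (size p1 + size p2 <= (size p).+1)%N /\
        (ca < lin a q0 -> (size p2 <= size p)%N) /\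
        (lin a q0 <= ca -> exists w, is_vertex P w /\ walk PA (psi q0) p1 (psi w))).
Proof.
elim: p => [|q1 rest IH] q0 qk /=.
  by move=> -> hk; left; split => //; exists [::].
move=> [E W] hk.
have Vq0 : is_vertex Q q0 by case: E => _ [].
have Vq1 : is_vertex Q q1 by case: E => _ [_ []].
case: (IH _ _ W hk) => [[h1 [p' [sp W']]] | [w' [p1 [p2 [Vw' [W2 [sz [Hgt Himp]]]]]]]].
- case: (lerP (lin a q0) ca) => h0.
    left; split => //; exists (psi q1 :: p'); split => //=.
    split => //; exact: E_PA_Q.
  right.
  case: (ltrP (lin a q1) ca) => h1'.
    have [w [Vw Ew]] := cross (edge_sym E) h1' h0.
    exists w, [::], (psi q1 :: p'); split => //; split.
      by split => //; exact: edge_sym.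
    split; first by rewrite /=; lia.
    split; first by move=> _ /=; lia.
    by contra0.
  have e1 : lin a q1 = ca by apply: le_anti; rewrite h1 h1'.
  exists q1, [::], p'; split; first exact: V_P_Q.
  split => //; split; first by rewrite /=; lia.
  split; first by move=> _; lia.
  by contra0.
- right.
  case: (lerP (lin a q0) ca) => h0; last first.
    exists w', [::], p2; split => //; split => //.
    have s2 : (size p2 <= (size rest).+1)%N by lia.
    split; first by rewrite /=; lia.
    split => //; by contra0.
  case: (lerP (lin a q1) ca) => h1.
    have [w [Vw W1]] := Himp h1.
    exists w', (psi q1 :: p1), p2; split => //; split => //.
    split; first by rewrite /=; lia.
    split; first by contra0.
    move=> _; exists w; split => //=; split => //; exact: E_PA_Q.
  have s2 := Hgt h1.
  case: (ltrP (lin a q0) ca) => h0'.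
    have [w [Vw Ew]] := cross E h0' h1.
    exists w', [:: psi w], p2; split => //; split => //.
    split; first by rewrite /=; lia.
    split; first by contra0.
    by move=> _; exists w; split => //=.
  have e0 : lin a q0 = ca by apply: le_anti; rewrite h0 h0'.
  exists w', [::], p2; split => //; split => //.
  split; first by rewrite /=; lia.
  split; first by contra0.
  by move=> _; exists q0; split; [exact: V_P_Q|].
Qed.

Variables kA kP : nat.
Hypothesis HA : diam_le Q kA.
Hypothesis HP : diam_le P kP.

Lemma reach xu qk : is_vertex Q xu -> lin a xu <= ca -> is_vertex Q qk -> lin a qk <= ca ->
  exists p, (size p <= kA + kP + 1)%N /\ walk PA (psi xu) p (psi qk).
Proof.
move=> Vu hu Vk hk.
have [p [sp W]] := HA Vu Vk.
case: (Claim W hk) => [[_ [p' [sp' W']]] | [w' [p1 [p2 [Vw' [W2 [sz [_ Himp]]]]]]]].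
  by exists p'; split => //; lia.
have [w [Vw W1]] := Himp hu.
have [pw [spw Ww]] := HP Vw Vw'.
exists (p1 ++ map psi pw ++ p2); split.
  by rewrite !size_cat size_map; lia.
apply: walk_cat W1 _; apply: walk_cat W2; exact: walk_P_PA.
Qed.

Lemma classify x : is_vertex PA (psi x) ->
  (is_vertex P x /\ lin a x = ca) \/ (is_vertex Q x /\ lin a x < ca).
Proof.
move=> V; have [_ h] := (PA_psi x).1 V.1.
case: (ltrP (lin a x) ca) => h'.
  by right; split => //; apply: V_Q_PA.
have e : lin a x = ca by apply: le_anti; rewrite h h'.
by left; split => //; apply: V_P_PA.
Qed.

Lemma not_vtx xv : Q xv -> ~ is_vertex Q xv -> exists z, Q z /\ supp_le z xv /\ z <> xv.
Proof.
move=> Qv nV; apply: NNPP => H; apply: nV; apply: (vtx_weak HS_Q) => // z Qz sz.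
by apply: NNPP => nz; apply: H; exists z.
Qed.

Lemma neq_entry (x y : 'cV[R]_n) : x <> y -> exists i, x i 0 <> y i 0.
Proof.
move=> ne; apply: NNPP => H; apply: ne; apply/matrixP => i j.
rewrite (ord1 j); apply: NNPP => h; apply: H; by exists i.
Qed.

Lemma mixed xu xv : is_vertex Q xu -> lin a xu < ca -> is_vertex P xv ->
  exists p, (size p <= kA + kP + 2)%N /\ walk PA (psi xu) p (psi xv).
Proof.
move=> Vu hu Vv.
have [[Av [av nv]] _] := Vv.
have Qv : Q xv by split.
case: (classic (is_vertex Q xv)) => [VQv | nVQv].
  have [p [sp W]] := reach Vu (ltW hu) VQv (ltac:(by rewrite av)).
  by exists p; split => //; lia.
have [z [[Az nz] [sz nzv]]] := not_vtx Qv nVQv.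
have [i1 hi1] := neq_entry nzv.
have [e [Ae [se [j1 ej1]]]] : exists e : 'cV[R]_n,
    A *m e = 0 /\ supp_le e xv /\ exists j, e j 0 < 0.
  have Ad : A *m (z - xv) = 0 by rewrite mulmxBr Az Av subrr.
  have sd : supp_le (z - xv) xv by move=> i h; rewrite !mxE h (sz i h); ring.
  case: (ltrP (z i1 0 - xv i1 0) 0) => h.
    by exists (z - xv); split => //; split => //; exists i1; rewrite !mxE.
  exists (- (z - xv)); split; first by rewrite mulmxN Ad oppr0.
  split; first by move=> i hi; rewrite mxE (sd i hi) oppr0.
  exists i1; rewrite !mxE oppr_lt0 lt_def h andbT subr_eq0; apply/eqP => //.
have kern : forall f, A *m f = 0 -> supp_le f xv -> lin a e != 0 ->
    f = (lin a f / lin a e) *: e.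
  move=> f Af sf ae.
  set lam := lin a f / lin a e.
  have le : lam * lin a e = lin a f by rewrite /lam divfK.
  have : xv + (f - lam *: e) = xv.
    apply: (vtx_strong HS_P HL_P Vv).
      split; first by rewrite mulmxDr mulmxBr Av Af -scalemxAr Ae scaler0 subrr addr0.
      by rewrite linD linD linN linZ le av; ring.
    move=> i hi; rewrite !mxE hi (sf i hi) (se i hi); ring.
  move/(congr1 (fun y => y - xv)); rewrite addrC addKr subrr => /eqP.
  by rewrite subr_eq0 => /eqP.
have ae : lin a e != 0.
  apply/negP => /eqP ae.
  have : xv + e = xv.
    apply: (vtx_strong HS_P HL_P Vv).
      by split; [rewrite mulmxDr Av Ae addr0 | rewrite linD ae av addr0].
    by move=> i hi; rewrite !mxE hi (se i hi) addr0.
  move/(congr1 (fun y => y - xv)); rewrite addrC addKr subrr => e0.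
  by move: ej1; rewrite e0 mxE ltxx.
have [i0 hi0 Hmin] := @arg_minP _ R _ j1 (fun i => e i 0 < 0) (fun i => xv i 0 / - e i 0) ej1.
pose ts := xv i0 0 / - e i0 0.
have ne0 : 0 < - e i0 0 by rewrite oppr_gt0.
have xi0 : 0 < xv i0 0.
  rewrite lt_def nv andbT; apply/eqP => h; move: hi0; rewrite (se i0 h) ltxx //.
have ts0 : 0 < ts by rewrite /ts divr_gt0.
have tse : ts * (- e i0 0) = xv i0 0 by rewrite /ts divfK // gt_eqF.
pose qv := xv + ts *: e.
have Aq : A *m qv = cA by rewrite mulmxDr -scalemxAr Ae scaler0 addr0.
have nq : nonneg qv.
  move=> i; rewrite !mxE.
  case: (ltrP (e i 0) 0) => hei.
    have := Hmin i hei; rewrite /= -/ts ler_pdivlMr ?oppr_gt0 //.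
    nra.
  have := nv i; nra.
have qi0 : qv i0 0 = 0 by rewrite !mxE; nra.
have sqv : forall i, xv i 0 = 0 -> qv i 0 = 0 by move=> i h; rewrite !mxE h (se i h); ring.
have VQq : is_vertex Q qv.
  apply: (vtx_weak HS_Q) => // z' [Az' nz'] sz'.
  have Af : A *m (z' - xv) = 0 by rewrite mulmxBr Az' Av subrr.
  have sf : supp_le (z' - xv) xv.
    by move=> i h; rewrite !mxE h (sz' i (sqv i h)); ring.
  have ef := kern _ Af sf ae.
  set lam := lin a (z' - xv) / lin a e in ef.
  have hl : lam = ts.
    have := sz' i0 qi0; have := congr1 (fun y : 'cV[R]_n => y i0 0) ef; rewrite /= !mxE => h1 h2.
    apply: (mulIf (negbT (gt_eqF ne0))); rewrite tse; lra.
  have -> : z' = xv + (z' - xv) by rewrite addrC subrK.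
  by rewrite ef hl.
have aq : lin a qv = ca + ts * lin a e by rewrite linD linZ av.
case: (ltrP 0 (lin a e)) => hae.
  have [p [sp W]] := HA Vu VQq.
  have [w [p1 [Vw [s1 W1]]]] := Head W (ltW hu) (ltac:(rewrite aq ltrDl; exact: mulr_gt0)).
  have [pw [spw Ww]] := HP Vw Vv.
  exists (p1 ++ map psi pw); split; first by rewrite size_cat size_map; lia.
  apply: walk_cat W1 _; exact: walk_P_PA.
have hae' : lin a e < 0 by rewrite lt_def eq_sym ae hae.
have aql : lin a qv < ca by rewrite aq gtrDl pmulr_rlt0.
have [p [sp W]] := reach Vu (ltW hu) VQq (ltW aql).
have Eq : is_edge PA (psi qv) (psi xv).
  apply: (edge_weak HS_PA).
  - by move/psi_inj => h; move: aql; rewrite h av ltxx.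
  - exact: V_PA_Q (ltW aql).
  - exact: V_PA_P.
  move=> y Sy hy; rewrite (PA_eq Sy) in hy *.
  set x2 := usubmx y in hy *.
  have [Ax2 nx2] := PA_Q Sy.
  have ax2 := PA_le Sy.
  have Af : A *m (x2 - xv) = 0 by rewrite mulmxBr Ax2 Av subrr.
  have sf : supp_le (x2 - xv) xv.
    move=> i h; have := hy (lshift 1 i); rewrite !psi_l (sqv i h) h !mxE => -> //; rewrite sub0r; apply/eqP; rewrite oppr_eq0; apply/eqP; exact: h.
  have ef := kern _ Af sf ae.
  set lam := lin a (x2 - xv) / lin a e in ef.
  have lae : lam * lin a e = lin a (x2 - xv) by rewrite /lam divfK.
  have af : lin a (x2 - xv) = lin a x2 - ca by rewrite linD linN av.
  have lam0 : 0 <= lam by nra.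
  have lamt : lam <= ts.
    have := nx2 i0; have := congr1 (fun y : 'cV[R]_n => y i0 0) ef; rewrite /= !mxE => h1 h2.
    nra.
  exists (1 - lam / ts); split.
    apply/andP; split.
      by rewrite subr_ge0 ler_pdivrMr // mul1r.
    by rewrite lerBlDr lerDl divr_ge0 // ltW.
  have -> : x2 = cc (1 - lam / ts) qv xv.
    apply/matrixP => i j; rewrite (ord1 j).
    have := congr1 (fun y : 'cV[R]_n => y i 0) ef; rewrite /= !mxE => h1.
    have -> : y (lshift 1 i) 0 = xv i 0 + lam * e i 0 by rewrite -h1; ring.
    by field; exact: lt0r_neq0 ts0.
  exact: psi_cc.
exists (rcons p (psi xv)); split; first by rewrite size_rcons; lia.
by rewrite -cats1; apply: walk_cat W _.
Qed.

Lemma main_sec : diam_le PA (kA + kP + 2).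
Proof.
move=> u v Vu Vv.
have [xu eu] : exists xu, u = psi xu by exists (usubmx u); exact: PA_eq Vu.1.
have [xv ev] : exists xv, v = psi xv by exists (usubmx v); exact: PA_eq Vv.1.
subst u v.
case: (classify Vu) => [[Pu au]|[Qu au]]; case: (classify Vv) => [[Pv av]|[Qv av]].
- have [p [sp W]] := HP Pu Pv.
  exists (map psi p); split; first by rewrite size_map; lia.
  exact: walk_P_PA.
- have [p [sp W]] := mixed Qv av Pu.
  have [q [sq Wq]] := walk_rev W.
  by exists q; rewrite sq.
- exact: mixed Qu au Pv.
- have [p [sp W]] := reach Qu (ltW au) Qv (ltW av).
  by exists p; split => //; lia.
Qed.

End Main.

Theorem theorem2 (R : realType) (m n : nat) (A : 'M[R]_(m, n)) (a : 'rV[R]_n)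
  (cA : 'cV[R]_m) (ca : R) (kA kP : nat) :
  mat_diam_le A kA ->
  diam_le (P_poly A a cA ca) kP ->
  diam_le (PAbar_poly A a cA ca) (kA + kP + 2).
Proof.
move=> HA HP; apply: main_sec => //; exact: HA.
Qed.
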